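(* Let $\mathbf{C}$ be a category of $\mathbf{FI}$ type and $M_\bullet=\bigoplus_i\mathrm{Ind}_{c_i}(V_i)$ a free $\mathbf{C}$-module of degree $\leq c$. Then in the coinvariant $\mathbf{C}$-module $d\mapsto M_d/G_d$, every map induced by a morphism of $\mathbf{C}$ is injective, and every map induced by a morphism $d\to e$ between objects with $c\leq d$ is an isomorphism. Moreover, for every object $d$ with $c_i\leq d$ for all $i$, one has $M_d/G_d\cong\bigoplus_i V_i/G_{c_i}$.
   Context: A category $\mathbf{C}$ is of $\mathbf{FI}$ type if: (1) all Hom-sets are finite; (2) every morphism is a monomorphism and every endomorphism is an isomorphism; (3) for all objects $c,d$ the group $G_d=\mathrm{Aut}_{\mathbf{C}}(d)$ acts transitively on $\mathrm{Hom}_{\mathbf{C}}(c,d)$; (4) for every $d$ only finitely many isomorphism classes of $c$ have $\mathrm{Hom}(c,d)\neq\emptyset$; (5) every pair $c_1\to d\leftarrow c_2$ has a pullback, and every pair $f_i:p\to c_i$ has a weak push-out, i.e. a commutative pullback square $g_i:c_i\to d$ such that for every other pullback square $h_i:c_i\to z$ with $h_1f_1=h_2f_2$ there is a unique $h:d\to z$ with $hg_i=h_i$. Write $c\leq d$ if $\mathrm{Hom}(c,d)\neq\emptyset$. A $\mathbf{C}$-module is a functor to complex vector spaces. For a finite-dimensional $G_c$-representation $V$, $\mathrm{Ind}_c(V)$ is $d\mapsto\mathbb{C}[\mathrm{Hom}(c,d)]\otimes_{\mathbb{C}[G_c]}V$. A free module is a finite direct sum of these, of degree $\leq d$ if each summand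 $\mathrm{Ind}_c(V)$ ($V\neq0$) has $c\leq d$. $W/G$ denotes coinvariants; for a $\mathbf{C}$-module these form a $\mathbf{C}$-module. *)

(* Defs.v *)
From HB Require Import structures.
From mathcomp Require Import all_boot all_order all_algebra.
From mathcomp Require Import complex.
From mathcomp Require Import reals.
From Stdlib Require List.

Set Implicit Arguments.
Unset Strict Implicit.
Unset Printing Implicit Defensive.

Import GRing.Theory.
Local Open Scope ring_scope.

Record category := Category {
  Obj : Type;
  Mor : Obj -> Obj -> finType;
  idm : forall a, Mor a a;
  hcomp : forall a b c, Mor b c -> Mor a b -> Mor a c;
  hcompA : forall a b c d (h : Mor c d) (g : Mor b c) (f : Mor a b),
      hcomp h (hcomp g f) = hcomp (hcomp h g) f;
  hcomp1m : forall a b (f : Mor a b), hcomp (idm b) f = f;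
  hcompm1 : forall a b (f : Mor a b), hcomp f (idm a) = f }.

Arguments Mor : clear implicits.
Arguments idm {_} a.
Arguments hcomp {_ a b c} g f.

Section CatDefs.
Variable C : category.

Definition obj_le (c d : Obj C) : Prop := inhabited (Mor C c d).

Definition obj_iso (c d : Obj C) : Prop :=
  exists (f : Mor C c d) (g : Mor C d c), hcomp g f = idm c /\ hcomp f g = idm d.

Definition is_pullback (c1 c2 d p : Obj C) (g1 : Mor C c1 d) (g2 : Mor C c2 d)
    (f1 : Mor C p c1) (f2 : Mor C p c2) : Prop :=
  hcomp g1 f1 = hcomp g2 f2 /\
  forall q (h1 : Mor C q c1) (h2 : Mor C q c2), hcomp g1 h1 = hcomp g2 h2 ->
    exists! h : Mor C q p, hcomp f1 h = h1 /\ hcomp f2 h = h2.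

Definition is_weak_pushout (p c1 c2 d : Obj C) (f1 : Mor C p c1) (f2 : Mor C p c2)
    (g1 : Mor C c1 d) (g2 : Mor C c2 d) : Prop :=
  is_pullback g1 g2 f1 f2 /\
  forall z (h1 : Mor C c1 z) (h2 : Mor C c2 z), is_pullback h1 h2 f1 f2 ->
    exists! h : Mor C d z, hcomp h g1 = h1 /\ hcomp h g2 = h2.

Definition is_auto (d : Obj C) (s : Mor C d d) : Prop :=
  exists t : Mor C d d, hcomp s t = idm d /\ hcomp t s = idm d.

Definition FI_type : Prop :=
  [/\
      (forall a b x (g : Mor C a b) (f1 f2 : Mor C x a),
          hcomp g f1 = hcomp g f2 -> f1 = f2),
      (forall d (s : Mor C d d), is_auto s),
      (forall c d (f g : Mor C c d), exists2 s : Mor C d d, is_auto s & hcomp s f = g),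
      (forall d, exists n (cs : 'I_n -> Obj C),
          forall c, obj_le c d -> exists i, obj_iso (cs i) c) &
      (forall c1 c2 d (g1 : Mor C c1 d) (g2 : Mor C c2 d),
          exists p (f1 : Mor C p c1) (f2 : Mor C p c2), is_pullback g1 g2 f1 f2) /\
      (forall p c1 c2 (f1 : Mor C p c1) (f2 : Mor C p c2),
          exists d (g1 : Mor C c1 d) (g2 : Mor C c2 d), is_weak_pushout f1 f2 g1 g2) ].
(* (1) finiteness of Hom-sets is built into [category] (Hom is a finType). *)

End CatDefs.

(* W / U is modelled by the complement U^C, with quotient map the      *)
(* projection onto U^C along U (a surjective linear map, kernel U).    *)

Section Quot.
Variables (K : fieldType) (W : vectType K) (U : {vspace W}).
Definition quot := subvs_of (U^C)%VS.
Definition qpi (w : W) : quot := vsproj (U^C)%VS (daddv_pi (U^C)%VS U w).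
End Quot.

Record grep (C : category) (K : fieldType) (c : Obj C) := GRep {
  gV : vectType K;
  grho : Mor C c c -> 'End(gV);
  grho1 : grho (idm c) = \1%VF;
  grhoM : forall g h, grho (hcomp g h) = (grho g \o grho h)%VF }.

Record summand (C : category) (K : fieldType) := Summand {
  sobj : Obj C;
  srep : grep K sobj }.

Section Ind.
Variables (C : category) (K : fieldType) (c : Obj C) (V : grep K c).

(* C[Hom(c,d)] (x) V, as V-valued functions on Hom(c,d) *)
Definition pre_ind (d : Obj C) := {ffun Mor C c d -> gV V}.

Definition tens d (f : Mor C c d) (v : gV V) : pre_ind d :=
  [ffun f' => if f' == f then v else 0].

(* relations  (f g) (x) v - f (x) (g v)  defining  (x)_{C[G_c]} *)
Definition ind_rel d : {vspace pre_ind d} :=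
  (\sum_(f : Mor C c d) \sum_(g : Mor C c c)
     limg (linfun (fun v : gV V => tens (hcomp f g) v - tens f (grho V g v))))%VS.

Definition ind d := quot (ind_rel d).

(* action of a morphism f : d -> e :  h (x) v  |->  (f h) (x) v *)
Definition pre_ind_map d e (f : Mor C d e) (x : pre_ind d) : pre_ind e :=
  [ffun h' : Mor C c e => \sum_(h : Mor C c d | hcomp f h == h') x h].

Definition ind_map d e (f : Mor C d e) (x : ind d) : ind e :=
  qpi (ind_rel e) (pre_ind_map f (vsval x)).

Definition rep_coinv := quot (\sum_(g : Mor C c c) limg (grho V g - \1%VF))%VS.

End Ind.

Section Free.
Variables (C : category) (K : fieldType).

Fixpoint fmod (l : seq (summand C K)) (d : Obj C) : vectType K :=
  match l with
  | [::] => Vector.clone K 'rV[K]_0 _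
  | s :: l' => Vector.clone K (ind (srep s) d * fmod l' d)%type _
  end.

Fixpoint fmod_map (l : seq (summand C K)) d e (f : Mor C d e) : fmod l d -> fmod l e :=
  match l return fmod l d -> fmod l e with
  | [::] => fun x => x
  | s :: l' => fun x => (ind_map f x.1, @fmod_map l' d e f x.2)
  end.

Definition coinv_rel l d : {vspace fmod l d} :=
  (\sum_(s : Mor C d d) limg (linfun (fun x : fmod l d => fmod_map s x - x)))%VS.

Definition coinv l d := quot (coinv_rel l d).

Definition coinv_map l d e (f : Mor C d e) (x : coinv l d) : coinv l e :=
  qpi (coinv_rel l e) (fmod_map f (vsval x)).

Fixpoint rep_coinv_sum (l : seq (summand C K)) : vectType K :=
  match l with
  | [::] => Vector.clone K 'rV[K]_0 _
  | s :: l' => Vector.clone K (rep_coinv (srep s) * rep_coinv_sum l')%type _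
  end.

End Free.

Arguments fmod_map {C K} l {d e} f x.
Arguments coinv_map {C K} l {d e} f x.

(* Main.v *)
Require Import Defs.
From HB Require Import structures.
From mathcomp Require Import all_boot all_order all_algebra.
From mathcomp Require Import complex reals.

Set Implicit Arguments.
Unset Strict Implicit.
Unset Printing Implicit Defensive.
Import GRing.Theory.
Local Open Scope ring_scope.

Lemma linfunE' (K : fieldType) (aT rT : vectType K) (f : aT -> rT) :
  linear f -> forall x, linfun f x = f x.
Proof.
move=> lf x.
pose fL : {linear aT -> rT} := HB.pack f (GRing.isLinear.Build _ _ _ _ f lf).
exact: (lfunE fL x).
Qed.

Section Q.
Variables (K : fieldType) (W : vectType K) (U : {vspace W}).

Lemma qpi_lin : linear (qpi U).
Proof. by move=> a x y; rewrite /qpi !linearP. Qed.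
HB.instance Definition _ := GRing.isLinear.Build K W (quot U) _ (qpi U) qpi_lin.

Lemma capCU : (U^C :&: U = 0)%VS.
Proof. by rewrite capvC capv_compl. Qed.

Lemma qpi_val (y : quot U) : qpi U (vsval y) = y.
Proof. by rewrite /qpi daddv_pi_id ?vsvalK ?subvsP // capCU. Qed.

Lemma qpi_eq0 w : (qpi U w == 0) = (w \in U).
Proof.
have Hadd' : daddv_pi U^C U w + daddv_pi U U^C w = w.
  by apply: daddv_pi_add capCU _; rewrite addvC addv_complf memvf.
apply/idP/idP.
  move/eqP => /(congr1 (@vsval _ _ _)); rewrite /qpi vsprojK ?memv_pi // => H0.
  by rewrite -Hadd' H0 add0r memv_pi.
move=> wU.
have H1 : daddv_pi U U^C w = w by rewrite daddv_pi_id // capv_compl.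
have H2 : daddv_pi U^C U w = 0.
  by move: Hadd'; rewrite H1 => /(congr1 (fun x => x - w)); rewrite addrK subrr.
by rewrite /qpi H2 linear0.
Qed.

Lemma qpiP u w : (qpi U u == qpi U w) = (u - w \in U).
Proof. by rewrite -qpi_eq0 linearB subr_eq0. Qed.

Lemma qpi_surj (y : quot U) : exists w, qpi U w = y.
Proof. by exists (vsval y); rewrite qpi_val. Qed.

Lemma val_qpi w : vsval (qpi U w) - w \in U.
Proof. by rewrite -qpiP qpi_val. Qed.
End Q.


Lemma sum_limg_sub (K : fieldType) (A B : vectType K) (I : finType)
   (F : I -> A -> B) (T : {vspace B}) :
  (forall i, linear (F i)) -> (forall i v, F i v \in T) ->
  (\sum_i limg (linfun (F i)) <= T)%VS.
Proof.
move=> lF HF; apply/subv_sumP => i _; apply/subvP => x /memv_imgP [v _ ->].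
by rewrite linfunE'.
Qed.

Lemma id_lin (K : fieldType) (A : vectType K) : linear (fun x : A => x).
Proof. by []. Qed.

Section Ind.
Variables (C : category) (K : fieldType) (c : Obj C) (V : grep K c).

Lemma pre_lin d e (f : Mor C d e) : linear (@pre_ind_map C K c V d e f).
Proof.
move=> a x y; apply/ffunP => h; rewrite !ffunE scaler_sumr -big_split /=.
by apply: eq_bigr => i _; rewrite !ffunE.
Qed.
HB.instance Definition _ d e f := GRing.isLinear.Build K (pre_ind V d) (pre_ind V e) _
   (@pre_ind_map C K c V d e f) (pre_lin f).

Lemma tens_lin d (h : Mor C c d) : linear (@tens C K c V d h).
Proof.
move=> a x y; apply/ffunP => h'; rewrite !ffunE.
by case: (h' == h); rewrite ?scaler0 ?addr0.
Qed.
HB.instance Definition _ d h := GRing.isLinear.Build K (gV V) (pre_ind V d) _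
   (@tens C K c V d h) (tens_lin h).

Lemma pre_tens d e (f : Mor C d e) (h : Mor C c d) (v : gV V) :
  pre_ind_map f (tens h v) = tens (hcomp f h) v.
Proof.
apply/ffunP => h'; rewrite !ffunE.
rewrite (eq_bigr (fun i => if i == h then v else 0)); last by move=> i _; rewrite ffunE.
rewrite -big_mkcondr /=.
case: eqP => [->|Hne].
  rewrite (eq_bigl (fun i => i == h)) ?big_pred1_eq // => i.
  by apply/andP/idP => [[_ //]|/eqP ->]; split.
rewrite big_pred0 // => i; apply/andP => [[/eqP Hi /eqP Hih]].
by apply: Hne; rewrite -Hi Hih.
Qed.

Lemma tens_decomp d (x : pre_ind V d) : x = \sum_h tens h (x h).
Proof.
apply/ffunP => h'; rewrite sum_ffunE (bigD1 h') //= ffunE eqxx big1 ?addr0 //.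
by move=> i /negbTE Hi; rewrite ffunE eq_sym Hi.
Qed.

Lemma sum_tens d (h : Mor C c d) (v : gV V) : \sum_h' tens h v h' = v.
Proof.
rewrite (bigD1 h) //= ffunE eqxx big1 ?addr0 // => i /negbTE Hi.
by rewrite ffunE Hi.
Qed.

Definition gen d (h : Mor C c d) (g : Mor C c c) (v : gV V) : pre_ind V d :=
  tens (hcomp h g) v - tens h (grho V g v).

Lemma gen_lin d h g : linear (@gen d h g).
Proof. by move=> a x y; rewrite /gen !linearP /= scalerBr scalerN addrACA. Qed.

Lemma gen_in d h g v : gen h g v \in ind_rel V d.
Proof.
rewrite /ind_rel; apply: (subvP (sumv_sup h isT (subvv _))).
apply: (subvP (sumv_sup g isT (subvv _))).
have -> : gen h g v = linfun (@gen d h g) v by rewrite linfunE' //; apply: gen_lin.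
exact: memv_img (memvf _).
Qed.

Lemma ind_rel_min d (T : {vspace pre_ind V d}) :
  (forall h g v, gen h g v \in T) -> (ind_rel V d <= T)%VS.
Proof.
move=> H; apply/subv_sumP => h _.
by apply: sum_limg_sub => [g|g v]; [apply: gen_lin | apply: H].
Qed.
End Ind.


Section Ind2.
Variables (C : category) (K : fieldType) (c : Obj C) (V : grep K c).

Lemma pre_rel d e (f : Mor C d e) r :
  r \in ind_rel V d -> pre_ind_map f r \in ind_rel V e.
Proof.
move=> Hr.
have : (ind_rel V d <= linfun (@pre_ind_map C K c V d e f) @^-1: ind_rel V e)%VS.
  apply: ind_rel_min => h g v; rewrite -memv_preim linfunE'; last first.
    exact: pre_lin.
  by rewrite /gen linearB /= !pre_tens hcompA; apply: gen_in.
move=> Hsub; move: (subvP Hsub r Hr); rewrite -memv_preim linfunE' //.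
exact: pre_lin.
Qed.

Lemma ind_map_lin d e (f : Mor C d e) : linear (@ind_map C K c V d e f).
Proof. by move=> a x y; rewrite /ind_map !linearP. Qed.
HB.instance Definition _ d e f := GRing.isLinear.Build K (ind V d) (ind V e) _
   (@ind_map C K c V d e f) (ind_map_lin f).

Lemma ind_map_qpi d e (f : Mor C d e) w :
  ind_map f (qpi (ind_rel V d) w) = qpi (ind_rel V e) (pre_ind_map f w).
Proof.
apply/eqP; rewrite /ind_map qpiP -linearB; apply: pre_rel; apply: val_qpi.
Qed.

Definition Wrel := (\sum_(g : Mor C c c) limg (grho V g - \1%VF))%VS.

Definition Psi1 d (x : pre_ind V d) : rep_coinv V :=
  qpi Wrel (\sum_h x h).

Lemma Psi1_lin d : linear (@Psi1 d).
Proof.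
move=> a x y; rewrite /Psi1 -linearP; congr qpi.
by rewrite scaler_sumr -big_split; apply: eq_bigr => h _; rewrite !ffunE.
Qed.
HB.instance Definition _ d := GRing.isLinear.Build K (pre_ind V d) (rep_coinv V) _
   (@Psi1 d) (@Psi1_lin d).

Lemma Psi1_tens d (h : Mor C c d) (v : gV V) : Psi1 (tens h v) = qpi Wrel v.
Proof. by rewrite /Psi1 sum_tens. Qed.

Lemma Psi1_gen d h g (v : gV V) : Psi1 (@gen C K c V d h g v) = 0.
Proof.
rewrite /gen linearB /= !Psi1_tens; apply/eqP; rewrite subr_eq0 qpiP.
rewrite -opprB rpredN; apply: (subvP (sumv_sup g isT (subvv _))).
have -> : grho V g v - v = (grho V g - \1)%VF v.
  by rewrite add_lfunE opp_lfunE id_lfunE.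
exact: memv_img (memvf _).
Qed.

Lemma Psi1_rel d r : r \in ind_rel V d -> Psi1 r = 0.
Proof.
move=> Hr.
have : (ind_rel V d <= lker (linfun (@Psi1 d)))%VS.
  apply: ind_rel_min => h g v; rewrite memv_ker linfunE'; last exact: Psi1_lin.
  by rewrite Psi1_gen.
move=> Hsub; move: (subvP Hsub r Hr); rewrite memv_ker linfunE'; last exact: Psi1_lin.
by move/eqP.
Qed.

Lemma Psi1_pre d e (f : Mor C d e) x : Psi1 (pre_ind_map f x) = Psi1 x.
Proof.
rewrite {1 2}(tens_decomp x) !linear_sum; apply: eq_bigr => h _ /=.
by rewrite pre_tens !Psi1_tens.
Qed.

Definition phi1 d (y : ind V d) : rep_coinv V := Psi1 (vsval y).

Lemma phi1_lin d : linear (@phi1 d).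
Proof. by move=> a x y; rewrite /phi1 !linearP. Qed.
HB.instance Definition _ d := GRing.isLinear.Build K (ind V d) (rep_coinv V) _
   (@phi1 d) (@phi1_lin d).

Lemma phi1_qpi d w : phi1 (qpi (ind_rel V d) w) = Psi1 w.
Proof.
apply/eqP; rewrite -subr_eq0 /phi1 -linearB /=; apply/eqP/Psi1_rel/val_qpi.
Qed.

Lemma phi1_map d e (f : Mor C d e) y : phi1 (ind_map f y) = phi1 y.
Proof. by rewrite /ind_map phi1_qpi Psi1_pre. Qed.

Definition R1 d := (\sum_(s : Mor C d d)
   limg (linfun (fun y : ind V d => ind_map s y - y)))%VS.

Lemma imap_sub_lin d (s : Mor C d d) : linear (fun y : ind V d => ind_map s y - y).
Proof. by move=> a x y; rewrite linearP scalerBr addrACA opprD. Qed.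

Lemma R1_gen d (s : Mor C d d) y : ind_map s y - y \in R1 d.
Proof.
apply: (subvP (sumv_sup s isT (subvv _))).
rewrite -(linfunE' (imap_sub_lin s)).
exact: memv_img (memvf _).
Qed.

Hypothesis Htrans : forall c d (f g : Mor C c d),
   exists2 s : Mor C d d, is_auto s & hcomp s f = g.

Lemma Psi1_ker d (z : pre_ind V d) :
  Psi1 z = 0 -> qpi (ind_rel V d) z \in R1 d.
Proof.
move=> Hz.
have Hb : forall s w, qpi (ind_rel V d) (pre_ind_map s w) - qpi (ind_rel V d) w \in R1 d.
  by move=> s w; rewrite -ind_map_qpi; apply: R1_gen.
have Hd : forall h h0 (v : gV V), qpi (ind_rel V d) (tens h v) - qpi (ind_rel V d) (tens h0 v) \in R1 d.
  move=> h h0 v; have [s _ <-] := Htrans h0 h.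
  by rewrite -pre_tens; apply: Hb.
case: (pickP (fun _ : Mor C c d => true)) => [h0 _|H0]; last first.
  have -> : z = 0 by rewrite (tens_decomp z) big_pred0 // => h; exact: H0.
  by rewrite linear0 mem0v.
set u := \sum_h z h.
have Hu : u \in Wrel by rewrite -qpi_eq0; apply/eqP.
have HW : (Wrel <= linfun (fun v => qpi (ind_rel V d) (tens h0 v)) @^-1: R1 d)%VS.
  apply/subv_sumP => g _; apply/subvP => x /memv_imgP [v _ ->].
  rewrite -memv_preim linfunE'; last by move=> a x1 y1; rewrite !linearP.
  rewrite add_lfunE opp_lfunE id_lfunE !linearB /=.
  have -> : qpi (ind_rel V d) (tens h0 (grho V g v)) = qpi (ind_rel V d) (tens (hcomp h0 g) v).
    apply/eqP; rewrite qpiP -opprB rpredN; exact: gen_in.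
  exact: Hd.
have Hu' : qpi (ind_rel V d) (tens h0 u) \in R1 d.
  move: (subvP HW u Hu); rewrite -memv_preim linfunE' //.
  by move=> a x1 y1; rewrite !linearP.
have -> : qpi (ind_rel V d) z = \sum_h (qpi (ind_rel V d) (tens h (z h)) - qpi (ind_rel V d) (tens h0 (z h))) + qpi (ind_rel V d) (tens h0 u).
  by rewrite sumrB /u !linear_sum /= sumrN subrK {1}(tens_decomp z) linear_sum.
by rewrite rpredD // rpred_sum // => h _; apply: Hd.
Qed.

Lemma phi1_surj d : obj_le c d -> forall y : rep_coinv V, exists x : ind V d, phi1 x = y.
Proof.
case=> h0 y; exists (qpi (ind_rel V d) (tens h0 (vsval y))).
by rewrite phi1_qpi Psi1_tens qpi_val.
Qed.

Lemma rep_coinv_dim0 : \dim {: gV V} = 0%N -> forall y : rep_coinv V, y = 0.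
Proof.
move=> H0 y; apply: val_inj => /=.
move/eqP: H0; rewrite dimv_eq0 => /eqP Hf.
have Hs : ({:gV V} <= 0)%VS by rewrite Hf subvv.
have := subvP Hs _ (memvf (vsval y)).
by rewrite memv0 => /eqP.
Qed.
End Ind2.


Section Free2.
Variables (C : category) (K : fieldType).

Fixpoint Psi (l : seq (summand C K)) d : fmod l d -> rep_coinv_sum l :=
  match l return fmod l d -> rep_coinv_sum l with
  | [::] => fun _ => 0
  | s :: l' => fun x => (phi1 x.1, @Psi l' d x.2)
  end.

Lemma fmod_map_lin l d e (f : Mor C d e) : linear (@fmod_map C K l d e f).
Proof.
elim: l => [|s l IH] a x y //=.
by rewrite (ind_map_lin f) IH.
Qed.

Lemma Psi_lin l d : linear (@Psi l d).
Proof.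
elim: l => [|s l IH] a x y /=; first by rewrite scaler0 addr0.
by rewrite (phi1_lin) IH.
Qed.
HB.instance Definition _ l d := GRing.isLinear.Build K (fmod l d) (rep_coinv_sum l) _
   (@Psi l d) (@Psi_lin l d).
HB.instance Definition _ l d e f := GRing.isLinear.Build K (fmod l d) (fmod l e) _
   (@fmod_map C K l d e f) (@fmod_map_lin l d e f).


Lemma Psi_map (l : seq (summand C K)) d e (f : Mor C d e) x : Psi (@fmod_map C K l d e f x) = Psi x.
Proof.
elim: l x => [|s l IH] x //=.
by rewrite phi1_map IH.
Qed.

Lemma gsub_lin (l : seq (summand C K)) d (s : Mor C d d) :
  linear (fun x : fmod l d => @fmod_map C K l d d s x - x).
Proof.
by move=> a x y; rewrite (fmod_map_lin s) scalerBr addrACA opprD.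
Qed.

Lemma coinv_gen (l : seq (summand C K)) d (s : Mor C d d) (x : fmod l d) : fmod_map l s x - x \in coinv_rel l d.
Proof.
apply: (subvP (sumv_sup s isT (subvv _))).
rewrite -(linfunE' (gsub_lin s)).
exact: memv_img (memvf _).
Qed.

Lemma Psi_coinv (l : seq (summand C K)) d (x : fmod l d) : x \in coinv_rel l d -> Psi x = 0.
Proof.
move=> Hx.
have : (coinv_rel l d <= lker (linfun (@Psi l d)))%VS.
  apply: sum_limg_sub => [s|s y]; first exact: gsub_lin.
  rewrite memv_ker linfunE'; last exact: Psi_lin.
  by rewrite linearB /= Psi_map subrr.
move=> Hsub; move: (subvP Hsub x Hx); rewrite memv_ker linfunE'; last exact: Psi_lin.
by move/eqP.
Qed.


Hypothesis Htrans : forall c d (f g : Mor C c d),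
   exists2 s : Mor C d d, is_auto s & hcomp s f = g.

Lemma Psi_ker (l : seq (summand C K)) d (x : fmod l d) :
  Psi x = 0 -> x \in coinv_rel l d.
Proof.
elim: l x => [|s l IH] x /=.
  move=> _; have -> : x = 0 by apply/matrixP => i [j Hj].
  exact: mem0v.
case: x => x1 x2 /= H.
have H1 : phi1 x1 = 0 by move/(congr1 fst): H.
have H2 : Psi x2 = 0 by move/(congr1 snd): H.
have -> : (x1, x2) = (x1, 0) + (0, x2) :> fmod (s :: l) d.
  by congr pair; rewrite ?addr0 ?add0r.
apply: rpredD.
  have Hx1 : x1 \in R1 (srep s) d.
    by rewrite -(qpi_val x1); apply: Psi1_ker.
  have Hsub : (R1 (srep s) d <= linfun (fun y : ind (srep s) d => (y, 0) : fmod (s :: l) d)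
               @^-1: coinv_rel (s :: l) d)%VS.
    apply: sum_limg_sub => [g|g y]; first exact: imap_sub_lin.
    rewrite -memv_preim linfunE'; last first.
      by move=> a u v; apply: (f_equal2 pair) => //=; rewrite scaler0 addr0.
    have -> : ((ind_map g y - y, 0) : fmod (s :: l) d) =
              fmod_map (s :: l) g ((y, 0) : fmod (s :: l) d) - (y, 0).
      by apply: (f_equal2 pair) => //=; rewrite linear0 subrr.
    exact: coinv_gen.
  move: (subvP Hsub x1 Hx1); rewrite -memv_preim linfunE' //.
  by move=> a u v; apply: (f_equal2 pair) => //=; rewrite scaler0 addr0.
have Hx2 := IH x2 H2.
have Hsub : (coinv_rel l d <= linfun (fun y : fmod l d => (0, y) : fmod (s :: l) d)
             @^-1: coinv_rel (s :: l) d)%VS.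
  apply: sum_limg_sub => [g|g y]; first exact: gsub_lin.
  rewrite -memv_preim linfunE'; last first.
    by move=> a u v; apply: (f_equal2 pair) => //=; rewrite scaler0 addr0.
  have -> : ((0, fmod_map l g y - y) : fmod (s :: l) d) =
            fmod_map (s :: l) g ((0, y) : fmod (s :: l) d) - (0, y).
    by apply: (f_equal2 pair) => //=; rewrite linear0 subrr.
  exact: coinv_gen.
move: (subvP Hsub x2 Hx2); rewrite -memv_preim linfunE' //.
by move=> a u v; apply: (f_equal2 pair) => //=; rewrite scaler0 addr0.
Qed.

End Free2.


Lemma surj_rinv (K : fieldType) (A B : vectType K) (F : A -> B) :
  linear F -> (forall y, exists x, F x = y) -> {G : B -> A | cancel G F}.
Proof.
move=> lF HF; exists (linfun F)^-1%VF => y.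
rewrite -(linfunE' lF) limg_lfunVK //.
have [x <-] := HF y; rewrite -(linfunE' lF x).
exact: memv_img (memvf _).
Qed.

Section Main.
Variables (C : category) (K : fieldType).
Hypothesis Htrans : forall c d (f g : Mor C c d),
   exists2 s : Mor C d d, is_auto s & hcomp s f = g.

Lemma Psi_surj (l : seq (summand C K)) d :
  (forall s, List.In s l -> \dim {: gV (srep s)} != 0%N -> obj_le (sobj s) d) ->
  forall y, exists x : fmod l d, Psi x = y.
Proof.
elim: l => [|s l IH] Hl y /=.
  by exists 0; apply/matrixP => i [j Hj].
case: y => y1 y2.
have [x2 <-] := IH (fun s' Hs' => Hl s' (or_intror Hs')) y2.
have [x1 <-] : exists x1 : ind (srep s) d, phi1 x1 = y1.
  case: (eqVneq (\dim {: gV (srep s)}) 0%N) => H0.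
    by exists 0; rewrite linear0 (rep_coinv_dim0 H0 y1).
  exact: (phi1_surj (Hl s (or_introl erefl) H0) y1).
by exists ((x1, x2) : fmod (s :: l) d).
Qed.

Definition Phi (l : seq (summand C K)) d (x : coinv l d) : rep_coinv_sum l :=
  Psi (vsval x).

Lemma Phi_lin (l : seq (summand C K)) d : linear (@Phi l d).
Proof. by move=> a x y; rewrite /Phi !linearP. Qed.

Lemma Phi_qpi (l : seq (summand C K)) d (w : fmod l d) :
  Phi (qpi (coinv_rel l d) w) = Psi w.
Proof.
apply/eqP; rewrite -subr_eq0 /Phi -linearB /=; apply/eqP/Psi_coinv/val_qpi.
Qed.

Lemma Phi_inj (l : seq (summand C K)) d : injective (@Phi l d).
Proof.
move=> x y Hxy; rewrite -(qpi_val x) -(qpi_val y); apply/eqP; rewrite qpiP.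
by apply: (Psi_ker Htrans); rewrite linearB /= -/(Phi x) -/(Phi y) Hxy subrr.
Qed.

Lemma Phi_map (l : seq (summand C K)) d e (f : Mor C d e) x :
  Phi (coinv_map l f x) = Phi x.
Proof. by rewrite /coinv_map Phi_qpi Psi_map. Qed.

Lemma Phi_surj (l : seq (summand C K)) d :
  (forall s, List.In s l -> \dim {: gV (srep s)} != 0%N -> obj_le (sobj s) d) ->
  forall y, exists x : coinv l d, Phi x = y.
Proof.
move=> Hl y; have [w <-] := Psi_surj Hl y.
by exists (qpi (coinv_rel l d) w); rewrite Phi_qpi.
Qed.

End Main.


Unset Implicit Arguments.
Set Strict Implicit.

Theorem mainTheorem12 (R : realType) (C : category) (HC : FI_type C)
    (l : seq (summand C R[i])) (c : Obj C)
    (Hdeg : forall s, List.In s l -> \dim {: gV (srep s)} != 0%N -> obj_le (sobj s) c) :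
  (forall (d e : Obj C) (f : Mor C d e), injective (coinv_map l f)) /\
  (forall (d e : Obj C) (f : Mor C d e), obj_le c d -> bijective (coinv_map l f)) /\
  (forall d : Obj C, (forall s, List.In s l -> obj_le (sobj s) d) ->
     exists phi : 'Hom(coinv l d, rep_coinv_sum l), bijective phi).
Proof.
case: HC => _ _ Htrans _ _.
have Hle : forall a b e : Obj C, obj_le a b -> obj_le b e -> obj_le a e.
  by move=> a b e [f] [g]; constructor; exact: hcomp g f.
split.
  move=> d e f x y /(congr1 (@Phi _ _ l e)); rewrite !Phi_map.
  exact: (Phi_inj Htrans).
split.
  move=> d e f Hcd.
  have Hd : forall s, List.In s l -> \dim {: gV (srep s)} != 0%N -> obj_le (sobj s) d.
    by move=> s Hs H0; apply: Hle (Hdeg s Hs H0) Hcd.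
  have [Gd Hgd] := surj_rinv (@Phi_lin _ _ l d) (Phi_surj Hd).
  exists (fun y => Gd (@Phi _ _ l e y)) => [x|y].
    by rewrite Phi_map; apply: (Phi_inj Htrans); rewrite Hgd.
  by apply: (Phi_inj Htrans); rewrite Phi_map Hgd.
move=> d Hd.
have Hd' : forall s, List.In s l -> \dim {: gV (srep s)} != 0%N -> obj_le (sobj s) d.
  by move=> s Hs _; apply: Hd.
have [G HG] := surj_rinv (@Phi_lin _ _ l d) (Phi_surj Hd').
exists (linfun (@Phi _ _ l d)); exists G => [x|y]; rewrite linfunE' ?HG //;
  try exact: Phi_lin.
by apply: (Phi_inj Htrans); rewrite HG.
Qed.
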